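(* Let $1 \le p < \infty$ and $n\ge1$. Then $$U(n,p) \le \prod_{k=1}^n w(k,p).$$
   Context: Let $q = 1/p$ (with $0^q=0$). For $n\ge 1$, $U(n,p)$ denotes the maximum of $\mathrm{per}(A)=\sum_{\sigma\in S_n}\prod_{i=1}^n a_{i\sigma(i)}$ over all real $n\times n$ matrices $A$ each of whose rows has $\ell_p$-norm equal to $1$. For $k\ge1$ let $\Delta_k=\{y\in\mathbb R^k: y_i\ge 0,\ \sum_i y_i=1\}$ be the set of stochastic vectors, and define $P_k(y) = \sum_{i=1}^k y_i^q \prod_{j\ne i}(1-y_j)^q$ for $y\in\Delta_k$. Then $w(k,p)=\max_{y\in\Delta_k} P_k(y)$. *)

(* Defs.v *)
From HB Require Import structures.
From mathcomp Require Import all_boot all_order all_algebra perm.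
From mathcomp Require Import classical_sets reals exp.
Set Implicit Arguments. Unset Strict Implicit. Unset Printing Implicit Defensive.
Import Order.TTheory GRing.Theory Num.Theory.
Local Open Scope classical_set_scope.
Local Open Scope ring_scope.

Definition permanent (R : realType) (n : nat) (A : 'M[R]_n) : R :=
  \sum_(s : 'S_n) \prod_(i < n) A i (s i).

Definition row_lp_norm (R : realType) (n : nat) (p : R) (A : 'M[R]_n) (i : 'I_n) : R :=
  (\sum_(j < n) `|A i j| `^ p) `^ (1 / p).

(* U(n,p): the maximum (= supremum, attained by compactness) of per(A) over
   real n x n matrices all of whose rows have l_p-norm 1 *)
Definition U (R : realType) (n : nat) (p : R) : R :=
  sup [set permanent A | A in [set A : 'M[R]_n | forall i, row_lp_norm p A i = 1]].

Definition stochastic (R : realType) (k : nat) (y : 'rV[R]_k) : Prop :=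
  (forall i, 0 <= y ord0 i) /\ \sum_(i < k) y ord0 i = 1.

(* P_k(y) = sum_i y_i^q prod_{j <> i} (1 - y_j)^q with q = 1/p, 0^q = 0 *)
Definition Pk (R : realType) (k : nat) (p : R) (y : 'rV[R]_k) : R :=
  \sum_(i < k) (y ord0 i `^ (1 / p) *
                \prod_(j < k | j != i) (1 - y ord0 j) `^ (1 / p)).

(* w(k,p) = max over the simplex of P_k (as a supremum; attained by compactness) *)
Definition w (R : realType) (k : nat) (p : R) : R :=
  sup [set Pk p y | y in [set y : 'rV[R]_k | stochastic y]].

(* Main.v *)
From HB Require Import structures.
From mathcomp Require Import all_boot all_order all_algebra perm.
From mathcomp Require Import all_classical all_reals all_analysis.
From mathcomp Require Import ring lra.
Require Import Defs.
Set Implicit Arguments. Unset Strict Implicit. Unset Printing Implicit Defensive.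
Import Order.TTheory GRing.Theory Num.Theory.
Local Open Scope classical_set_scope.
Local Open Scope ring_scope.


Section Perm.
Variable R : realType.

Definition pminor n (A : 'M[R]_n) i j := permanent (row' i (col' j A)).

Lemma expand_pminor n (A : 'M[R]_n) i j :
  pminor A i j = \sum_(s : 'S_n | s i == j) \prod_(k | i != k) A k (s k).
Proof.
case: n A i j => [|n] A i0 j0; first by case: i0.
rewrite (reindex (lift_perm i0 j0)); last first.
  pose ulsf i (s : 'S_n.+1) k := odflt k (unlift (s i) (s (lift i k))).
  have ulsfK i (s : 'S_n.+1) k: lift (s i) (ulsf i s k) = s (lift i k).
    rewrite /ulsf; have:= neq_lift i k.
    by rewrite -(can_eq (permK s)) => /unlift_some[] ? ? ->.
  have inj_ulsf: injective (ulsf i0 _).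
    move=> s; apply: can_inj (ulsf (s i0) s^-1%g) _ => k'.
    by rewrite {1}/ulsf ulsfK !permK liftK.
  exists (fun s => perm (inj_ulsf s)) => [s _ | s].
    by apply/permP=> k'; rewrite permE /ulsf lift_perm_lift lift_perm_id liftK.
  move/(s _ =P _) => si0; apply/permP=> k.
  case: (unliftP i0 k) => [k'|] ->; rewrite ?lift_perm_id //.
  by rewrite lift_perm_lift -si0 permE ulsfK.
rewrite /pminor /permanent /=.
apply: eq_big => [s | s _]; first by rewrite lift_perm_id eqxx.
case: (pickP 'I_n) => [k0 _ | n0]; last first.
  by rewrite !big1 // => [j /unlift_some[i] | i _]; have:= n0 i.
rewrite (reindex (lift i0)).
  by apply: eq_big => [k | k _] /=; rewrite ?neq_lift // !mxE lift_perm_lift.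
exists (fun k => odflt k0 (unlift i0 k)) => k; first by rewrite liftK.
by case/unlift_some=> k' -> ->.
Qed.

Lemma expand_per_row n (A : 'M[R]_n) i0 :
  permanent A = \sum_j A i0 j * pminor A i0 j.
Proof.
rewrite /permanent (partition_big (fun s : 'S_n => s i0) predT) //=.
apply: eq_bigr => j0 _; rewrite expand_pminor big_distrr /=.
apply: eq_bigr => s /eqP Dsi0.
rewrite (bigID (pred1 i0)) /= big_pred1_eq Dsi0; congr (_ * _).
by apply: eq_bigl => i; rewrite eq_sym.
Qed.

Lemma per_tr n (A : 'M[R]_n) : permanent A^T = permanent A.
Proof.
have invS : injective (fun s : 'S_n => (s^-1)%g) by exact: invg_inj.
rewrite /permanent [in LHS](reindex_inj invS) /=.
apply: eq_bigr => s _ /=; rewrite (reindex_perm s) /=.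
by apply: eq_bigr => i _; rewrite mxE permK.
Qed.

Lemma pminor_tr n (A : 'M[R]_n) i j : pminor A^T i j = pminor A j i.
Proof.
rewrite /pminor -per_tr; congr permanent.
by apply/matrixP => k l; rewrite !mxE.
Qed.

Lemma expand_per_col n (A : 'M[R]_n) j0 :
  permanent A = \sum_i (A i j0 * pminor A i j0).
Proof.
rewrite -per_tr (expand_per_row _ j0).
by under eq_bigr do rewrite pminor_tr mxE.
Qed.

End Perm.


Section Basic.
Variables (R : realType) (p : R).
Hypothesis hp : 1 <= p.

Lemma p_gt0 : 0 < p. Proof. exact: lt_le_trans ltr01 hp. Qed.
Lemma p_neq0 : p != 0. Proof. exact: lt0r_neq0 p_gt0. Qed.
Lemma pq1 : p * (1 / p) = 1. Proof. by rewrite mul1r divff // p_neq0. Qed.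
Lemma q_gt0 : 0 < 1 / p. Proof. by rewrite divr_gt0 // p_gt0. Qed.
Lemma q_neq0 : 1 / p != 0. Proof. exact: lt0r_neq0 q_gt0. Qed.

Lemma powRpq (x : R) : 0 <= x -> (x `^ p) `^ (1 / p) = x.
Proof. by move=> x0; rewrite -powRrM pq1 powRr1. Qed.

Lemma powRqp (x : R) : 0 <= x -> (x `^ (1 / p)) `^ p = x.
Proof. by move=> x0; rewrite -powRrM mulrC pq1 powRr1. Qed.

Definition inS n (A : 'M[R]_n) := forall i, row_lp_norm p A i = 1.

Lemma inSE n (A : 'M[R]_n) : inS A <-> forall i, \sum_j `|A i j| `^ p = 1.
Proof.
split => H i; last by rewrite /row_lp_norm H powR1.
have := H i; rewrite /row_lp_norm => /eqP; rewrite powR_eq1 => /orP[/eqP //|/orP[]].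
  by rewrite ltNge sumr_ge0 // => i0 _; exact: powR_ge0.
by rewrite (negPf q_neq0).
Qed.

Lemma powR_le1 (x : R) : 0 <= x -> x `^ p <= 1 -> x <= 1.
Proof.
move=> x0 h; rewrite leNgt; apply/negP => x1.
have := le1r_powR (ltW x1) hp => h2.
by have := le_trans h2 h; rewrite leNgt x1.
Qed.

Lemma entry_le1 n (A : 'M[R]_n) i j : inS A -> `|A i j| <= 1.
Proof.
move=> /inSE /(_ i) H; apply: powR_le1 => //.
rewrite -H (bigD1 j) //= lerDl sumr_ge0 // => k _; exact: powR_ge0.
Qed.

Lemma per_norm_le n (A : 'M[R]_n) : (forall i j, `|A i j| <= 1) ->
  `|permanent A| <= n`!%:R.
Proof.
move=> H; rewrite /permanent.
apply: le_trans (ler_norm_sum _ _ _) _.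
rewrite -card_Sn -sumr_const; apply: ler_sum => s _.
rewrite normr_prod.
have h : \prod_(i < n) `|A i (s i)| <= \prod_(i < n) (1:R).
  by apply: ler_prod => i _; rewrite normr_ge0 H.
by move: h; rewrite [X in _ <= X]big1.
Qed.

Definition SU n := [set permanent A | A in [set A : 'M[R]_n | inS A]].

Lemma inS1 n : inS (1%:M : 'M[R]_n).
Proof.
apply/inSE => i; rewrite (bigD1 i) //= big1 => [|j /negPf ji].
  by rewrite !mxE eqxx normr1 powR1 addr0.
by rewrite !mxE eq_sym ji normr0 powR0 // p_neq0.
Qed.

Lemma per1 n : permanent (1%:M : 'M[R]_n) = 1.
Proof.
rewrite /permanent (bigD1 (1%g : 'S_n)) //= big1 => [|i _]; last by rewrite perm1 !mxE eqxx.
rewrite big1 ?addr0 // => s Ds.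
have [i si] : exists i, s i != i.
  apply/existsP; apply: contraR Ds => /existsPn H; apply/eqP/permP => i.
  by rewrite perm1; apply/eqP; have := H i; rewrite negbK.
by rewrite (bigD1 i) //= !mxE eq_sym (negPf si) mul0r.
Qed.

Lemma has_sup_SU n : has_sup (SU n).
Proof.
split; first by exists 1; exists 1%:M; [exact: inS1| exact: per1].
exists n`!%:R => _ [A AS <-].
apply: le_trans (ler_norm _) (per_norm_le _) => i j; exact: entry_le1.
Qed.

Lemma per_le_U n (A : 'M[R]_n) : inS A -> permanent A <= U n p.
Proof. by move=> AS; apply: sup_upper_bound (has_sup_SU n) _ _; exists A. Qed.

Lemma U_ge1 n : 1 <= U n p.
Proof. by rewrite -(per1 n); apply: per_le_U; exact: inS1. Qed.

Lemma U0 : U 0 p = 1.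
Proof.
apply/eqP; rewrite eq_le U_ge1 andbT; apply: ge_sup.
  by exists 1; exists 1%:M; [exact: inS1| exact: per1].
move=> _ [A _ <-]; rewrite /permanent.
rewrite (eq_bigr (fun _ => 1)) => [|s _]; last by rewrite big_ord0.
by rewrite sumr_const card_Sn.
Qed.

End Basic.


Section Bound.
Variables (R : realType) (p : R).
Hypothesis hp : 1 <= p.

Definition rowmod n (A : 'M[R]_n) i0 (v : 'I_n -> R) : 'M[R]_n :=
  \matrix_(i, j) if i == i0 then v j else A i j.

Lemma pminor_rowmod n (A : 'M[R]_n) i0 v j :
  pminor (rowmod A i0 v) i0 j = pminor A i0 j.
Proof.
rewrite /pminor; congr permanent; apply/matrixP => k l.
by rewrite !mxE eq_sym (negPf (neq_lift i0 k)).
Qed.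

Lemma per_rowmod n (A : 'M[R]_n) i0 v :
  permanent (rowmod A i0 v) = \sum_j v j * pminor A i0 j.
Proof.
rewrite (expand_per_row _ i0); apply: eq_bigr => j _.
by rewrite pminor_rowmod mxE eqxx.
Qed.

Lemma per0 (A : 'M[R]_0) : permanent A = 1.
Proof.
rewrite /permanent (eq_bigr (fun _ => 1)) => [|s _]; last by rewrite big_ord0.
by rewrite sumr_const card_Sn.
Qed.

Lemma per_abs_le_U n (A : 'M[R]_n) : inS p A -> `|permanent A| <= U n p.
Proof.
move=> AS; have [pos|neg] := leP 0 (permanent A).
  by rewrite ger0_norm //; exact: per_le_U.
case: n A AS neg => [|n] A AS neg; first by rewrite per0 ltNge ler01 in neg.
rewrite ltr0_norm //.
have -> : - permanent A = permanent (rowmod A ord0 (fun j => - A ord0 j)).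
  rewrite per_rowmod (expand_per_row _ ord0) -sumrN; apply: eq_bigr => j _.
  by rewrite mulNr.
apply: per_le_U => //; apply/inSE => // i; rewrite -((inSE hp A).1 AS i).
by apply: eq_bigr => j _; rewrite !mxE; case: ifP => // /eqP ->; rewrite normrN.
Qed.

Lemma powRV (x y : R) : 0 < x -> (x^-1) `^ y = (x `^ y)^-1.
Proof.
move=> x0; apply: (@mulIf _ (x `^ y)); first by rewrite lt0r_neq0 // powR_gt0.
by rewrite -powRM ?invr_ge0 ?ltW // mulVf ?lt0r_neq0 // powR1 mulVf // lt0r_neq0 // powR_gt0.
Qed.

Lemma powR_div_norm (x y : R) : 0 < y -> `|x / y| `^ p = `|x| `^ p * (y `^ p)^-1.
Proof.
move=> y0; rewrite -(powRV p y0) -powRM ?normr_ge0 ?invr_ge0 ?(ltW y0) //.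
by rewrite normrM normfV (gtr0_norm y0).
Qed.

Lemma per_bound n (B : 'M[R]_n) :
  `|permanent B| <= U n p * \prod_r (\sum_c `|B r c| `^ p) `^ (1/p).
Proof.
have U0' : 0 <= U n p by apply: le_trans ler01 (U_ge1 hp n).
have Pge0 : 0 <= \prod_r (\sum_c `|B r c| `^ p) `^ (1/p).
  by apply: prodr_ge0 => r _; exact: powR_ge0.
case: (pickP (fun r => \sum_c `|B r c| `^ p == 0)) => [r /eqP Nr0 | Npos].
  have Br0 c : B r c = 0.
    have := @psumr_eq0P _ _ xpredT _ (fun c _ => powR_ge0 `|B r c| p) Nr0 c isT.
    by move/powR_eq0_eq0/normr0_eq0.
  rewrite /permanent big1 ?normr0 ?mulr_ge0 // => s _.
  by rewrite (bigD1 r) //= Br0 mul0r.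
pose N r := \sum_c `|B r c| `^ p.
have N0 r : 0 < N r.
  by rewrite lt0r Npos sumr_ge0 // => c _; exact: powR_ge0.
pose c r := N r `^ (1/p).
have c0 r : 0 < c r by apply: powR_gt0.
pose B' := \matrix_(i, j) (B i j / c i).
have -> : permanent B = (\prod_r c r) * permanent B'.
  rewrite /permanent mulr_sumr; apply: eq_bigr => s _.
  rewrite -big_split /=; apply: eq_bigr => i _.
  by rewrite mxE mulrC divfK // lt0r_neq0.
rewrite normrM ger0_norm; last by apply: prodr_ge0 => r _; exact: ltW.
rewrite mulrC; apply: ler_wpM2r; first by apply: prodr_ge0 => r _; exact: ltW.
apply: per_abs_le_U; apply/inSE => // i.
have cp : c i `^ p = N i by rewrite powRqp // ltW.
have -> : \sum_j `|B' i j| `^ p = \sum_j `|B i j| `^ p * (c i `^ p)^-1.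
  by apply: eq_bigr => j _; rewrite mxE powR_div_norm.
by rewrite -mulr_suml cp -/(N i) divff // lt0r_neq0.
Qed.

End Bound.


Section Wfacts.
Variables (R : realType) (p : R).
Hypothesis hp : 1 <= p.

Lemma powRq_le1 (x : R) : 0 <= x <= 1 -> x `^ (1/p) <= 1.
Proof.
case/andP => x0 x1.
have := @ge0_ler_powR R (1/p) (ltW (q_gt0 hp)) x 1; rewrite powR1; apply => //; by rewrite nnegrE.
Qed.

Lemma stoch_le1 k (y : 'rV[R]_k) i : stochastic y -> 0 <= y ord0 i <= 1.
Proof.
case=> y0 y1; rewrite y0 /= -y1 (bigD1 i) //= lerDl sumr_ge0 //.
Qed.

Lemma Pk_ge0 k (y : 'rV[R]_k) : 0 <= Pk p y.
Proof.
apply: sumr_ge0 => i _; apply: mulr_ge0; first exact: powR_ge0.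
by apply: prodr_ge0 => j _; exact: powR_ge0.
Qed.

Lemma Pk_le k (y : 'rV[R]_k) : stochastic y -> Pk p y <= k%:R.
Proof.
move=> ys; rewrite /Pk -[k in k%:R]card_ord -sumr_const.
apply: ler_sum => i _; apply: mulr_ile1.
- exact: powR_ge0.
- by apply: prodr_ge0 => j _; exact: powR_ge0.
- exact/powRq_le1/stoch_le1.
apply: prodr_ile1 => j _; rewrite powR_ge0 /=; apply: powRq_le1.
by have /andP[a b] := stoch_le1 j ys; rewrite subr_ge0 b /= lerBlDr lerDl.
Qed.

Lemma Pk_le_w k (y : 'rV[R]_k) : stochastic y -> Pk p y <= w k p.
Proof.
move=> ys; apply: sup_upper_bound; last by exists y.
split; first by exists (Pk p y); exists y.
by exists k%:R => _ [z zs <-]; exact: Pk_le.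
Qed.

Lemma w_ge0 k : 0 <= w k.+1 p.
Proof.
pose e : 'rV[R]_k.+1 := \row_j (j == ord0)%:R.
have es : stochastic e.
  split=> [i|]; first by rewrite mxE ler0n.
  by rewrite (bigD1 ord0) //= big1 => [|j /negPf jn]; rewrite mxE ?eqxx ?addr0 ?jn.
exact: le_trans (Pk_ge0 e) (Pk_le_w es).
Qed.

End Wfacts.


Section Calc.
Variable R : realType.

Lemma is_derive_comp (f g : R -> R) (x df dg : R) :
  is_derive x (1:R) f df -> is_derive (f x) (1:R) g dg -> is_derive x (1:R) (g \o f) (dg * df).
Proof.
move=> hf hg; apply: DeriveDef.
  apply/derivable1_diffP/differentiable_comp; apply/derivable1_diffP.
    exact: (@ex_derive _ _ _ _ _ _ _ hf).
  exact: (@ex_derive _ _ _ _ _ _ _ hg).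
rewrite -derive1E derive1_comp; last 2 first.
- exact: (@ex_derive _ _ _ _ _ _ _ hf).
- exact: (@ex_derive _ _ _ _ _ _ _ hg).
by rewrite !derive1E !derive_val.
Qed.

End Calc.


Section Calc2.
Variable R : realType.

Lemma is_derive_lin (k c t : R) : is_derive t (1:R) (fun x => c + k * x) k.
Proof.
have -> : (fun x : R => c + k * x) = cst c + k \*: id by apply/funext => x.
by apply: is_derive_eq; rewrite add0r [LHS]mulr1.
Qed.

Lemma is_derive_ext (f g : R -> R) t df : f = g -> is_derive t (1:R) f df -> is_derive t 1 g df.
Proof. by move=> ->. Qed.

End Calc2.


Section Foc.
Variable R : realType.

Lemma foc (p M b s : R) : 0 < p -> 0 < s <= 1 ->
  (forall t, (expR t - 1) * b + M <= M * expR ((1/p) * ln (1 - s + s * expR (p * t)))) ->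
  b = M * s.
Proof.
move=> p0 /andP[s0 s1] H.
pose E := expR \o (fun x : R => 0 + p * x).
pose N := (fun x : R => (1 - s) + s * x) \o E.
have N0 t : 0 < N t.
  rewrite /N /E /=; have := expR_gt0 (0 + p * t) => e0.
  by apply: ltr_pwDr; [rewrite mulr_gt0 | rewrite subr_ge0].
pose G := expR \o ((fun x : R => 0 + (1/p) * x) \o ((@ln R) \o N)).
pose f := ((fun x : R => (M - b) + b * x) \o expR) + ((fun x : R => 0 + (- M) * x) \o G).
have fE t : f t = (expR t - 1) * b + M - M * expR ((1/p) * ln (1 - s + s * expR (p * t))).
  by rewrite /f /G /N /E !fctE /= !add0r; ring.
have dE t := is_derive_comp (is_derive_lin p 0 t) (is_derive_expR _).
have dN t := is_derive_comp (dE t) (is_derive_lin s (1 - s) _).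
have dL t := is_derive_comp (dN t) (is_derive1_ln (N0 t)).
have dH t := is_derive_comp (dL t) (is_derive_lin (1/p) 0 _).
have dG t := is_derive_comp (dH t) (is_derive_expR _).
have dF1 t := is_derive_comp (is_derive_expR t) (is_derive_lin b (M - b) _).
have dF2 t := is_derive_comp (dG t) (is_derive_lin (- M) 0 _).
have df t := is_deriveD (dF1 t) (dF2 t).
have f00 : f 0 = 0.
  by rewrite fE expR0 subrr mul0r add0r mulr0 expR0 mulr1 subrK ln1 mulr0 expR0 mulr1 subrr.
have fmax : is_derive (0:R) (1:R) f 0.
  apply: (@derive1_at_max _ f (-1) 1 0); first by lra.
  - by move=> t _; exact: (@ex_derive _ _ _ _ _ _ _ (df t)).
  - by rewrite in_itv /= ltrN10 ltr01.
  - by move=> t _; rewrite f00 fE subr_le0.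
have := @derive_val _ _ _ _ _ _ _ (df 0); rewrite (@derive_val _ _ _ _ _ _ _ fmax).
have -> : N 0 = 1 by rewrite /N /E /= mulr0 addr0 expR0 mulr1 subrK.
rewrite /= ?add0r ?mulr0 ?expR0 !mulr1 subrK ln1 mulr0 expR0 invr1 !mul1r ?mulr1.
have -> : p^-1 * (s * p) = s by rewrite mulrCA mulVf ?mulr1 // lt0r_neq0.
by move/eqP; rewrite eq_sym addr_eq0 mulNr opprK => /eqP.
Qed.

End Foc.


Section FocM.
Variables (R : realType) (p : R).
Hypothesis hp : 1 <= p.

Lemma foc_matrix n (A : 'M[R]_n) : inS p A ->
  (forall B : 'M[R]_n, inS p B -> permanent B <= permanent A) ->
  forall i j, A i j * pminor A i j = permanent A * `|A i j| `^ p.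
Proof.
move=> AS Amax i j.
have p0 := p_gt0 hp.
have [->|Aij0] := eqVneq (A i j) 0.
  by rewrite mul0r normr0 powR0 ?mulr0 // p_neq0.
set M := permanent A; set b := A i j * pminor A i j; set s := `|A i j| `^ p.
have s0 : 0 < s by apply: powR_gt0; rewrite normr_gt0.
have rowS := (inSE hp A).1 AS i.
have s1 : s <= 1.
  by rewrite -rowS (bigD1 j) //= lerDl sumr_ge0 // => k _; exact: powR_ge0.
apply: (foc p0 (_ : 0 < s <= 1)) => [|t]; first by rewrite s0 s1.
pose N := 1 - s + s * expR (p * t).
have N0 : 0 < N.
  have := expR_gt0 (p * t) => e0.
  by apply: ltr_pwDr; [rewrite mulr_gt0 | rewrite subr_ge0].
pose c := expR (- ((1/p) * ln N)).
have c0 : 0 < c by exact: expR_gt0.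
pose v := fun k => c * (if k == j then A i j * expR t else A i k).
have perB : permanent (rowmod A i v) = c * (M + (expR t - 1) * b).
  rewrite per_rowmod /M (expand_per_row A i) [LHS](bigD1 j) //= [X in _ = c * (X + _)](bigD1 j) //=.
  have -> : \sum_(k < n | k != j) v k * pminor A i k = c * \sum_(k < n | k != j) A i k * pminor A i k.
    by rewrite mulr_sumr; apply: eq_bigr => k /negPf kj; rewrite /v kj mulrA.
  rewrite /v eqxx /b; ring.
have BS : inS p (rowmod A i v).
  apply/inSE => // k; case: (eqVneq k i) => [->|ki]; last first.
    rewrite -((inSE hp A).1 AS k); apply: eq_bigr => l _.
    by rewrite mxE (negPf ki).
  have -> : \sum_l `|rowmod A i v i l| `^ p = c `^ p * N.
    rewrite /N (bigD1 j) //= [in RHS]addrC mulrDr; congr (_ + _).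
      rewrite mxE eqxx /v eqxx normrM (gtr0_norm c0) powRM ?normr_ge0 ?(ltW c0) //.
      rewrite normrM (gtr0_norm (expR_gt0 t)) powRM ?normr_ge0 ?(ltW (expR_gt0 t)) //.
      by rewrite -expRM (mulrC t p) -/s.
    rewrite -rowS [X in _ = _ * (X - _)](bigD1 j) //= -/s addrAC subrr add0r mulr_sumr; apply: eq_bigr => l /negPf lj.
    by rewrite mxE eqxx /v lj normrM (gtr0_norm c0) powRM ?normr_ge0 ?(ltW c0).
  rewrite /c -expRM (_ : -((1/p) * ln N) * p = - ln N); last first.
    by rewrite mulNr [_ * p]mulrC mulrA pq1 // mul1r.
  by rewrite expRN lnK ?mulVf ?lt0r_neq0 // posrE.
have := Amax _ BS; rewrite perB -/M => h.
have -> : expR ((1/p) * ln N) = c^-1 by rewrite /c expRN invrK.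
rewrite -(ler_pM2l c0) [X in _ <= X]mulrCA mulfV ?lt0r_neq0 // mulr1.
by rewrite addrC.
Qed.

End FocM.

Import numFieldNormedType.Exports.

Section Cont.
Variables (R : realType) (p : R).
Hypothesis hp : 1 <= p.

Lemma cont_powRnorm : continuous (fun x : R => `|x| `^ p).
Proof.
move=> x; have [->|x0] := eqVneq x 0.
  apply/cvgrPdist_le => e e0; near=> y.
  rewrite normr0 powR0 ?p_neq0 // sub0r normrN ger0_norm ?powR_ge0 //.
  have y1 : `|y| <= 1.
    by near: y; exists 1 => //= z; rewrite /ball_ /= sub0r normrN => /ltW.
  have ye : `|y| <= e.
    by near: y; exists e => //= z; rewrite /ball_ /= sub0r normrN => /ltW.
  have [->|y0] := eqVneq y 0; first by rewrite normr0 powR0 ?p_neq0 // ltW.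
  apply: le_trans ye; apply: ge1r_powR => //; by rewrite normr_gt0 y0.
have nx : 0 < `|x| by rewrite normr_gt0.
apply: (@continuous_comp _ _ _ (@Num.norm _ R) (fun a => a `^ p)).
  exact: norm_continuous.
apply: differentiable_continuous; apply/derivable1_diffP.
by apply: derivable_powR; rewrite in_itv /= nx.
Unshelve. all: by end_near.
Qed.

Lemma cont_sum (T : topologicalType) (I : finType) (F : I -> T -> R) :
  (forall i, continuous (F i)) -> continuous (fun x => \sum_i F i x).
Proof.
move=> H; rewrite /index_enum; elim: (Finite.enum I) => [|a l IH].
  have -> : (fun x => \sum_(i <- [::]) F i x) = cst 0 by apply/funext => x; rewrite big_nil.
  exact: cst_continuous.
have -> : (fun x => \sum_(i <- a :: l) F i x) = F a + (fun x => \sum_(i <- l) F i x).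
  by apply/funext => x; rewrite big_cons.
by move=> x; apply: continuousD; [exact: H | exact: IH].
Qed.

Lemma cont_prod (T : topologicalType) (I : finType) (F : I -> T -> R) :
  (forall i, continuous (F i)) -> continuous (fun x => \prod_i F i x).
Proof.
move=> H; rewrite /index_enum; elim: (Finite.enum I) => [|a l IH].
  have -> : (fun x => \prod_(i <- [::]) F i x) = cst 1 by apply/funext => x; rewrite big_nil.
  exact: cst_continuous.
have -> : (fun x => \prod_(i <- a :: l) F i x) = F a \* (fun x => \prod_(i <- l) F i x).
  by apply/funext => x; rewrite big_cons.
by move=> x; apply: continuousM; [exact: H | exact: IH].
Qed.

End Cont.

Import numFieldNormedType.Exports.

Section EVT.
Variables (R : realType) (p : R).
Hypothesis hp : 1 <= p.

Lemma exists_max n : exists2 A : 'M[R]_n, inS p A &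
  forall B : 'M[R]_n, inS p B -> permanent B <= permanent A.
Proof.
pose Phi (v : 'rV[R]_(n * n)) := permanent (vec_mx v).
pose K := [set v : 'rV[R]_(n * n) | inS p (vec_mx v)].
have K0 : K !=set0 by exists (mxvec 1%:M); rewrite /K /= mxvecK; exact: inS1.
pose g (i : 'I_n) (v : 'rV[R]_(n * n)) := \sum_j `|v ord0 (mxvec_index i j)| `^ p.
have gc i : continuous (g i).
  apply: cont_sum => j v.
  apply: (@continuous_comp _ _ _ (fun v : 'rV[R]_(n * n) => v ord0 (mxvec_index i j))
     (fun x : R => `|x| `^ p) v); first exact: coord_continuous.
  exact: cont_powRnorm.
have KE : K = \bigcap_(i in setT) (g i @^-1` [set 1]).
  apply/seteqP; split => v /=.
    move=> /(inSE hp) Kv i _ /=; rewrite -(Kv i) /g; apply: eq_bigr => j _.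
    by rewrite mxE.
  move=> Hv; apply/(inSE hp) => i; rewrite -(Hv i I) /g; apply: eq_bigr => j _.
  by rewrite mxE.
have Kc : compact K.
  apply: bounded_closed_compact; last first.
    rewrite KE; apply: closed_bigI => i _; apply: preimage_closed.
      by move=> v _; exact: gc.
    exact: closed_eq.
  rewrite /= /bounded_near; near=> M => v Kv /=.
  have M1 : 1 <= M by near: M; apply: nbhs_pinfty_ge; rewrite realE ler01.
  apply: le_trans M1.
  rewrite /Num.norm /= mx_normrE; apply/bigmax_leP; split => //= -[a k] _ /=.
  rewrite ord1; case/mxvec_indexP: k => i j.
  have := entry_le1 hp i j Kv; by rewrite mxE.
have Phic : {within K, continuous Phi}.
  apply: continuous_subspaceT.
  have -> : Phi = fun v => \sum_(s : 'S_n) \prod_(i < n) v ord0 (mxvec_index i (s i)).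
    by apply/funext => v; rewrite /Phi /permanent; apply: eq_bigr => s _; apply: eq_bigr => i _; rewrite mxE.
  apply: cont_sum => s; apply: cont_prod => i.
  exact: coord_continuous.
have [c Kc' cmax] := EVT_max_rV K0 Kc Phic.
exists (vec_mx c); first by move: Kc'; rewrite inE.
move=> B BS; have := cmax (mxvec B); rewrite /Phi mxvecK; apply.
by rewrite inE /K /= mxvecK.
Unshelve. all: by end_near.
Qed.

End EVT.


Section Main.
Variables (R : realType) (p : R).
Hypothesis hp : 1 <= p.

Lemma prod_lift n (F : 'I_n.+1 -> R) i :
  \prod_(j < n.+1 | j != i) F j = \prod_(k < n) F (lift i k).
Proof.
rewrite big_mkcond (bigD1_ord i) //= eqxx mul1r; apply: eq_bigr => k _.
by rewrite eq_sym neq_lift.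
Qed.

Lemma U_step n : U n.+1 p <= U n p * w n.+1 p.
Proof.
have [A AS Amax] := exists_max hp n.+1.
set M := permanent A.
have M1 : 1 <= M by rewrite -(per1 R n.+1); apply: Amax; exact: inS1.
have M0 : 0 < M by exact: lt_le_trans ltr01 M1.
have UM : U n.+1 p <= M.
  apply: ge_sup; first by exists M; exists A.
  by move=> _ [B BS <-]; exact: Amax.
have fc := foc_matrix hp AS Amax.
pose y : 'rV[R]_n.+1 := \row_i `|A i ord0| `^ p.
have rowS := (inSE hp A).1 AS.
have ys : stochastic y.
  split => [i|]; first by rewrite mxE powR_ge0.
  apply: (@mulfI _ M); first by rewrite lt0r_neq0.
  rewrite mulr1 {2}/M (expand_per_col A ord0) mulr_sumr; apply: eq_bigr => i _.
  by rewrite fc mxE.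
apply: le_trans UM _; apply: le_trans (ler_wpM2l (le_trans ler01 (U_ge1 hp n)) (Pk_le_w hp ys)).
rewrite /M (expand_per_col A ord0) /Pk mulr_sumr; apply: ler_sum => i _.
apply: le_trans (ler_norm _) _; rewrite normrM.
have -> : y ord0 i `^ (1 / p) = `|A i ord0| by rewrite mxE powRpq.
rewrite mulrCA; apply: ler_wpM2l => //.
apply: le_trans (per_bound hp _) _; apply: ler_wpM2l; first exact: le_trans ler01 (U_ge1 hp n).
rewrite prod_lift le_eqVlt; apply/orP; left; apply/eqP; apply: eq_bigr => k _.
congr (_ `^ _); rewrite mxE.
rewrite -(rowS (lift i k)) (bigD1_ord ord0) //= addrC addrK; apply: eq_bigr => c _.
by rewrite !mxE.
Qed.

Lemma U_bound n : U n p <= \prod_(1 <= k < n.+1) w k p.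
Proof.
elim: n => [|n IH]; first by rewrite U0 // big_geq.
apply: le_trans (U_step n) _; rewrite big_nat_recr //=.
by apply: ler_wpM2r => //; exact: w_ge0.
Qed.

End Main.

Unset Implicit Arguments.
Theorem theorem2p1 (R : realType) (n : nat) (p : R) :
  1 <= p -> (1 <= n)%N ->
  U n p <= \prod_(1 <= k < n.+1) w k p.
Proof. by move=> hp _; exact: U_bound. Qed.
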